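(* Let $k\geq 29$ and let $Q$ be the graph constructed below. Then $|V(Q)|=2k+1$ and $Q$ has no Hamiltonian path.
   Context: Fix an integer $k\geq 29$ and set $l=2\lfloor (k-12)/17\rfloor$, $m=\lfloor (2k-l+1)/8\rfloor$, $r=2k+1-l-8m$ (so $r\in\{1,3,5,7\}$). Let $H$ be the graph with vertex set $\{u,v,a,b,c,d,e,f\}$ and edge set $\{ub,ud,vc,ve,ab,ac,fd,fe,bc,ce,ed,db\}$. Take $m$ disjoint copies $H_1,\ldots,H_m$ of $H$, and let $u_i,v_i$ be the vertices of $H_i$ corresponding to $u,v$. Let $U=\{u_i,v_i:1\leq i\leq m\}$ and let $R$ be a set of $r$ new vertices. Let $T$ be the graph obtained from the disjoint union $H_1\cup\cdots\cup H_m$ by adding the vertices of $R$ and joining every pair of distinct vertices of $U\cup R$ by an edge (so $U\cup R$ becomes a clique). Let $L$ be a complete graph on $l$ vertices, and let $Q=L+T$ be the join of $L$ and $T$ (every vertex of $L$ adjacent to every vertex of $T$). *)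

(* Defs.v *)
From mathcomp Require Import all_boot.
Set Implicit Arguments. Unset Strict Implicit. Unset Printing Implicit Defensive.

Definition lpar (k : nat) : nat := 2 * ((k - 12) %/ 17).
Definition mpar (k : nat) : nat := (2 * k - lpar k + 1) %/ 8.
Definition rpar (k : nat) : nat := 2 * k + 1 - lpar k - 8 * mpar k.

(* Vertices of H, encoded as 'I_8: u=0, v=1, a=2, b=3, c=4, d=5, e=6, f=7. *)
Definition H_edges : seq (nat * nat) :=
  [:: (0,3); (0,5); (1,4); (1,6); (2,3); (2,4); (7,5); (7,6);
      (3,4); (4,6); (6,5); (5,3)].

Definition H_adj (p q : 'I_8) : bool :=
  ((val p, val q) \in H_edges) || ((val q, val p) \in H_edges).

Definition isUV (p : 'I_8) : bool := (val p == 0) || (val p == 1).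

(* Vertex set of Q = L + T :
   inl (inl x)      : vertex x of L (l vertices)
   inl (inr (i,p))  : vertex p of copy H_i (m copies of 8 vertices)
   inr z            : vertex z of R (r vertices) *)
Definition QVert (k : nat) : finType :=
  ('I_(lpar k) + ('I_(mpar k) * 'I_8) + 'I_(rpar k))%type.

Definition Q_adj (k : nat) : rel (QVert k) := fun x y =>
  (x != y) &&
  match x, y with
  | inl (inl _), _ => true
  | _, inl (inl _) => true
  | inl (inr (i, p)), inl (inr (j, q)) =>
      ((i == j) && H_adj p q) || (isUV p && isUV q)
  | inl (inr (_, p)), inr _ => isUV p
  | inr _, inl (inr (_, q)) => isUV q
  | inr _, inr _ => true
  end.

Definition hamiltonian_path (T : finType) (e : rel T) (s : seq T) : Prop :=
  [/\ uniq s, forall v : T, v \in s & sorted e s].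

(* Main.v *)
Require Import Defs.
From mathcomp Require Import all_boot zify.
Set Implicit Arguments. Unset Strict Implicit. Unset Printing Implicit Defensive.

Definition allowedN (ab : nat * nat) : bool :=
  (ab.1 != ab.2) && ((((ab.1, ab.2) \in H_edges) || ((ab.2, ab.1) \in H_edges)) ||
    (((ab.1 == 0) || (ab.1 == 1)) && ((ab.2 == 0) || (ab.2 == 1)))).

Definition vp (pr : 'I_8 * 'I_8) : nat * nat := (val pr.1, val pr.2).

Definition allowed (pr : 'I_8 * 'I_8) : bool := allowedN (vp pr).

Lemma allowedE (p q : 'I_8) : allowed (p, q) = (p != q) && (H_adj p q || (isUV p && isUV q)).
Proof. by []. Qed.

Definition E13 : seq (nat * nat) :=
  [:: (0,3); (0,5); (1,4); (1,6); (2,3); (2,4); (7,5); (7,6);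
      (3,4); (4,6); (6,5); (5,3); (0,1)].

Definition meN (e : nat * nat) (ab : nat * nat) : bool :=
  ((ab.1, ab.2) == e) || ((ab.2, ab.1) == e).
Definition me e (pr : 'I_8 * 'I_8) := meN e (vp pr).

Definition dot (c : seq nat) (x : nat -> nat) :=
  sumn [seq nth 0 c j * x j | j <- iota 0 13].

Lemma sumn_mapD (A : Type) (f g : A -> nat) l :
  sumn [seq f a + g a | a <- l] = sumn (map f l) + sumn (map g l).
Proof. elim: l => //= a l ->; lia. Qed.

Lemma eq_dot c x y : (forall j, x j = y j) -> dot c x = dot c y.
Proof. by move=> h; rewrite /dot; congr sumn; apply: eq_map => j; rewrite h. Qed.

Lemma dotD c x y : dot c (fun j => x j + y j) = dot c x + dot c y.
Proof. rewrite /dot; elim: (iota 0 13) => // j l IH; rewrite [LHS]/= IH [in RHS]/= mulnDr; lia. Qed.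

Lemma dot0 c : dot c (fun _ => 0) = 0.
Proof. rewrite /dot; elim: (iota 0 13) => // j l IH; by rewrite [LHS]/= IH muln0. Qed.

Definition allN := [seq (a, b) | a <- iota 0 8, b <- iota 0 8].
Definition ckN (Q : pred (nat * nat)) c :=
  all (fun ab => allowedN ab ==> (nat_of_bool (Q ab) == dot c (fun j => meN (nth (0,0) E13 j) ab))) allN.

Lemma count_dec (Q : pred (nat * nat)) (c : seq nat) lp :
  ckN Q c ->
  all allowed lp ->
  count (fun pr => Q (vp pr)) lp = dot c (fun j => count (me (nth (0,0) E13 j)) lp).
Proof.
move=> /allP H'.
have H : forall pr, allowed pr ==> (nat_of_bool (Q (vp pr)) == dot c (fun j => me (nth (0,0) E13 j) pr)).
  by case=> p q; apply: H'; apply/allpairsP; exists (val p, val q); rewrite !mem_iota /=; split => //; apply: ltn_ord.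
elim: lp => [|pr lp IH] al.
  by rewrite dot0.
move: al => /andP[ap al].
have -> : dot c (fun j => count (me (nth (0,0) E13 j)) (pr :: lp)) = dot c (fun j => me (nth (0,0) E13 j) pr) + dot c (fun j => count (me (nth (0,0) E13 j)) lp) by rewrite -dotD; apply: eq_dot.
rewrite -IH //; have /implyP/(_ ap)/eqP <- := H pr; done.
Qed.

Lemma deg_ck : ckN (fun ab => (ab.1 == 2) || (ab.2 == 2)) [:: 0;0;0;0;1;1].
Proof. by vm_compute. Qed.
Definition degQ (p : nat) (ab : nat * nat) := (ab.1 == p) || (ab.2 == p).
Definition forQ (X : seq nat) (ab : nat * nat) := (ab.1 \in X) && (ab.2 \in X).

Lemma key (x : nat -> nat) :
  2 <= dot [:: 0; 0; 0; 0; 1; 1; 0; 0; 0; 0; 0; 0; 0] x ->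
  2 <= dot [:: 1; 0; 0; 0; 1; 0; 0; 0; 1; 0; 0; 1; 0] x ->
  2 <= dot [:: 0; 0; 1; 0; 0; 1; 0; 0; 1; 1; 0; 0; 0] x ->
  2 <= dot [:: 0; 1; 0; 0; 0; 0; 1; 0; 0; 0; 1; 1; 0] x ->
  2 <= dot [:: 0; 0; 0; 1; 0; 0; 0; 1; 0; 1; 1; 0; 0] x ->
  2 <= dot [:: 0; 0; 0; 0; 0; 0; 1; 1; 0; 0; 0; 0; 0] x ->
  dot [:: 1; 1; 1; 1; 1; 1; 1; 1; 1; 1; 1; 1; 1] x <= 7 ->
  dot [:: 0; 0; 0; 0; 1; 1; 1; 1; 1; 1; 1; 1; 0] x <= 5 ->
  dot [:: 0; 0; 0; 0; 1; 1; 0; 0; 1; 0; 0; 0; 0] x <= 2 ->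
  dot [:: 0; 0; 0; 0; 0; 0; 1; 1; 0; 0; 1; 0; 0] x <= 2 ->
  dot [:: 1; 1; 0; 0; 1; 1; 1; 1; 1; 1; 1; 1; 0] x <= 6 ->
  dot [:: 0; 0; 1; 1; 1; 1; 1; 1; 1; 1; 1; 1; 0] x <= 6 ->
  dot [:: 0; 0; 0; 0; 1; 0; 0; 0; 0; 0; 0; 0; 0] x <= 1 ->
  dot [:: 0; 0; 0; 0; 0; 1; 0; 0; 0; 0; 0; 0; 0] x <= 1 ->
  dot [:: 0; 0; 0; 0; 0; 0; 1; 0; 0; 0; 0; 0; 0] x <= 1 ->
  dot [:: 0; 0; 0; 0; 0; 0; 0; 1; 0; 0; 0; 0; 0] x <= 1 ->
  False.
Proof. rewrite /dot /=; lia. Qed.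

Lemma local_contra lp :
  all allowed lp ->
  (forall p, 2 <= p < 8 -> 2 <= count (fun pr => degQ p (vp pr)) lp) ->
  (forall X, uniq X -> all (fun a => a < 8) X -> count (fun pr => forQ X (vp pr)) lp <= (size X).-1) ->
  False.
Proof.
move=> al hd hf; apply: (@key (fun j => count (me (nth (0,0) E13 j)) lp)).
- by rewrite -(@count_dec (degQ 2)) //; apply: hd.
- by rewrite -(@count_dec (degQ 3)) //; apply: hd.
- by rewrite -(@count_dec (degQ 4)) //; apply: hd.
- by rewrite -(@count_dec (degQ 5)) //; apply: hd.
- by rewrite -(@count_dec (degQ 6)) //; apply: hd.
- by rewrite -(@count_dec (degQ 7)) //; apply: hd.
- by rewrite -(@count_dec (forQ [:: 0; 1; 2; 3; 4; 5; 6; 7])) //; apply: hf.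
- by rewrite -(@count_dec (forQ [:: 2; 3; 4; 5; 6; 7])) //; apply: hf.
- by rewrite -(@count_dec (forQ [:: 2; 3; 4])) //; apply: hf.
- by rewrite -(@count_dec (forQ [:: 5; 6; 7])) //; apply: hf.
- by rewrite -(@count_dec (forQ [:: 0; 2; 3; 4; 5; 6; 7])) //; apply: hf.
- by rewrite -(@count_dec (forQ [:: 1; 2; 3; 4; 5; 6; 7])) //; apply: hf.
- by rewrite -(@count_dec (forQ [:: 2; 3])) //; apply: hf.
- by rewrite -(@count_dec (forQ [:: 2; 4])) //; apply: hf.
- by rewrite -(@count_dec (forQ [:: 5; 7])) //; apply: hf.
- by rewrite -(@count_dec (forQ [:: 6; 7])) //; apply: hf.
Qed.

Section SeqLemmas.
Variable T : eqType.
Implicit Types s : seq T.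

Definition prs s := zip s (behead s).

Lemma pairs_count (X : pred T) s :
  count (fun pr => X pr.1 && X pr.2) (prs s) <= (count X s).-1.
Proof.
rewrite /prs; elim: s => // x t IH; case: t IH => [|y t] IH //=.
move: IH => /=; case: (X x); case: (X y) => /=; lia.
Qed.

Lemma count_fst (a : pred T) s : count (fun pr => a pr.1) (prs s) <= count a s.
Proof.
rewrite /prs; elim: s => // x t IH; case: t IH => [|y t] IH //=.
move: IH => /=; case: (a x); case: (a y) => /=; lia.
Qed.

Lemma count_snd0 (a : pred T) s : count (fun pr => a pr.2) (prs s) <= count a (behead s).
Proof.
rewrite /prs; elim: s => // x t IH; case: t IH => [|y t] IH //=.
move: IH => /=; case: (a y) => /=; lia.
Qed.

Lemma count_snd (a : pred T) s : count (fun pr => a pr.2) (prs s) <= count a s.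
Proof.
apply: leq_trans (count_snd0 a s) _; case: s => //= x t; lia.
Qed.

Lemma prs_uniq s : uniq s -> uniq (prs s).
Proof. exact: zip_uniql. Qed.

Lemma pred_ex x s : x \in s -> x != head x s -> exists y, (y, x) \in prs s.
Proof.
rewrite /prs; case: s => // a t; elim: t a => [|b t IH] a /=.
  by rewrite inE => /eqP ->; rewrite eqxx.
rewrite inE => /orP [/eqP ->|xt]; first by rewrite eqxx.
move=> _; case xb: (x == b).
  by exists a; rewrite (eqP xb) inE eqxx.
have [y hy] := IH b xt (negbT xb).
by exists y; rewrite inE hy orbT.
Qed.

Lemma succ_ex x s : x \in s -> x != last x s -> exists z, (x, z) \in prs s.
Proof.
rewrite /prs; case: s => // a t; elim: t a => [|b t IH] a /=.
  by rewrite inE => /eqP ->; rewrite eqxx.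
rewrite inE => /orP [/eqP ->|xt] hl.
  by exists b; rewrite inE eqxx.
have [z hz] := IH b xt hl.
by exists z; rewrite inE hz orbT.
Qed.

Lemma sorted_pair (e : rel T) s a b : sorted e s -> (a, b) \in prs s -> e a b.
Proof.
rewrite /prs; case: s => // x t; elim: t x => [|y t IH] x //=.
move=> /andP [exy pt]; rewrite inE => /orP [/eqP [-> ->]|h] //.
exact: (IH y pt h).
Qed.

End SeqLemmas.

Lemma count_card (T : finType) (s : seq T) (a : pred T) :
  uniq s -> (forall x, x \in s) -> count a s = #|a|.
Proof.
move=> us cov; rewrite -size_filter.
have /card_uniqP <- : uniq (filter a s) by exact: filter_uniq.
by apply: eq_card => x; rewrite mem_filter cov andbT.
Qed.

Section Glob.
Variable k : nat.
Local Notation T := (QVert k).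

Definition mk (i : 'I_(mpar k)) (p : 'I_8) : T := inl (inr (i, p)).
Definition isL (x : T) : bool := if x is inl (inl _) then true else false.
Definition inC (i : 'I_(mpar k)) (x : T) : bool :=
  if x is inl (inr (j, _)) then j == i else false.
Definition loc (x : T) : 'I_8 := if x is inl (inr (_, p)) then p else ord0.

Lemma mk_inj i : injective (mk i).
Proof. by move=> p q [->]. Qed.

Lemma adj_inC i (q : 'I_8) (y : T) : ~~ isL y -> 2 <= q ->
  Q_adj y (mk i q) || Q_adj (mk i q) y -> inC i y.
Proof.
move=> nL q2.
have nq : isUV q = false by case: q q2 => [[|[|n]] ?].
case: y nL => [[l|[j p]]|r] //= _; rewrite /Q_adj /= nq ?andbF ?orbF //.
by move=> /orP [/andP [_ /andP [/eqP -> _]]|/andP [_ /andP [/eqP -> _]]].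
Qed.

Lemma inC_mk i x : inC i x -> x = mk i (loc x).
Proof. by case: x => [[l|[j p]]|r] //= /eqP ->. Qed.

Variable s : seq T.
Hypothesis us : uniq s.
Hypothesis cov : forall x, x \in s.
Hypothesis ss : sorted (@Q_adj k) s.

Definition special (x : T) : bool :=
  (x == head x s) || (x == last x s) ||
  has (fun pr => ((pr.1 == x) && isL pr.2) || ((pr.2 == x) && isL pr.1)) (prs s).

Definition lp (i : 'I_(mpar k)) : seq ('I_8 * 'I_8) :=
  [seq (loc pr.1, loc pr.2) | pr <- prs s & inC i pr.1 && inC i pr.2].

Lemma lp_count i (Q : pred (nat * nat)) :
  count (fun pr => Q (vp pr)) (lp i) =
  count (fun pr => inC i pr.1 && inC i pr.2 && Q (vp (loc pr.1, loc pr.2))) (prs s).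
Proof. by rewrite count_map count_filter; apply: eq_count => pr /=; rewrite andbC. Qed.

Lemma lp_allowed i : all allowed (lp i).
Proof.
apply/allP => pr /mapP [[x y]]; rewrite mem_filter /= => /andP [/andP [cx cy] h] ->.
have := sorted_pair ss h.
rewrite (inC_mk cx) (inC_mk cy) allowedE /Q_adj /= eqxx /= => /andP [nxy ->].
rewrite andbT; apply: contra nxy => /eqP ->; done.
Qed.

Lemma lp_forest i X : uniq X -> all (fun a => a < 8) X ->
  count (fun pr => forQ X (vp pr)) (lp i) <= (size X).-1.
Proof.
move=> uX aX; rewrite lp_count.
pose X' := [pred x | inC i x && (val (loc x) \in X)].
apply: leq_trans (_ : count (fun pr => X' pr.1 && X' pr.2) (prs s) <= _).
  by apply: sub_count => pr /=; rewrite /forQ /vp /=; case: (inC i pr.1); case: (inC i pr.2).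
apply: leq_trans (pairs_count _ _) _; rewrite (count_card _ us cov).
pose L := [seq mk i (inord n) | n <- X].
have -> : #|X'| = #|L|.
  apply: eq_card => x; rewrite /X' /= ; apply/idP/idP.
    move=> /andP [cx lx]; apply/mapP; exists (val (loc x)) => //.
    by rewrite inord_val -inC_mk.
  move=> /mapP [n nX ->]; rewrite inE /= eqxx inordK //.
  by move/allP: aX => /(_ n nX).
have /card_uniqP -> : uniq L.
  rewrite map_inj_in_uniq // => a b aX' bX' /mk_inj /(congr1 val).
  move/allP: aX => aX; rewrite /= !inordK //; [exact: aX | exact: aX].
by rewrite size_map.
Qed.

Lemma two_count (U : eqType) (a : pred U) (P : seq U) u v :
  uniq P -> u \in P -> v \in P -> u != v -> a u -> a v -> 2 <= count a P.
Proof.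
move=> uP uin vin nuv au av; rewrite -size_filter.
have -> : 2 = size [:: u; v] by [].
apply: uniq_leq_size; first by rewrite /= inE nuv.
by move=> w; rewrite !inE mem_filter => /orP [/eqP ->|/eqP ->]; apply/andP.
Qed.

Lemma lp_deg i : (forall p : 'I_8, 2 <= p -> ~~ special (mk i p)) ->
  forall p, 2 <= p < 8 -> 2 <= count (fun pr => degQ p (vp pr)) (lp i).
Proof.
move=> ns p /andP [p2 p8].
pose q : 'I_8 := inord p.
have qp : val q = p by apply: inordK.
pose x := mk i q.
have nsq : ~~ special x by apply: ns; rewrite qp.
move: nsq; rewrite /special !negb_or => /andP [/andP [nh nl] nhas].
have [y hy] := pred_ex (cov x) nh.
have [z hz] := succ_ex (cov x) nl.
have ay := sorted_pair ss hy; have az := sorted_pair ss hz.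
move/hasPn: nhas => nh'.
have nLy : ~~ isL y by apply: contra (nh' _ hy) => L; rewrite /= eqxx L orbT.
have nLz : ~~ isL z by apply: contra (nh' _ hz) => L; rewrite /= eqxx L.
have q2 : 2 <= q by rewrite qp.
have cy : inC i y by apply: (adj_inC nLy q2); rewrite ay.
have cz : inC i z by apply: (adj_inC nLz q2); rewrite az orbT.
rewrite lp_count; apply: (two_count (u := (y, x)) (v := (x, z))) => //.
- exact: prs_uniq.
- apply/negP => /eqP [yx _]; move: ay; rewrite yx /Q_adj eqxx //.
- by rewrite /= cy /= eqxx /degQ /vp /= qp eqxx orbT.
- by rewrite /= cz /= eqxx andbT /degQ /vp /= qp eqxx.
Qed.

Lemma copy_special i : exists p : 'I_8, (2 <= p) && special (mk i p).
Proof.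
case: (boolP [exists p : 'I_8, (2 <= p) && special (mk i p)]) => [/existsP //|/existsPn H]; exfalso.
apply: (@local_contra (lp i)).
- exact: lp_allowed.
- apply: lp_deg => p p2; have := H p; rewrite p2 //.
- exact: lp_forest.
Qed.

Lemma card_isL : #|[pred x : T | isL x]| = lpar k.
Proof.
rewrite -[in RHS](card_ord (lpar k)) -(card_image (f := fun j : 'I_(lpar k) => (inl (inl j) : T))); last by move=> a b [].
apply: eq_card => x; rewrite inE; apply/idP/idP.
  by case: x => [[l|[j p]]|r] //= _; apply/mapP; exists l => //; rewrite mem_enum.
by move=> /mapP [j _ ->].
Qed.

Lemma special_card : #|[pred x | special x]| <= 2 + 2 * lpar k.
Proof.
case Es: s => [|x0 t].
  apply: leq_trans (_ : #|[pred x : T | false]| <= _); last by rewrite card0.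
  by apply: subset_leq_card; apply/subsetP => x _; have := cov x; rewrite Es.
pose P := prs s.
pose cl := [:: x0; last x0 t] ++ [seq pr.1 | pr <- P & isL pr.2] ++ [seq pr.2 | pr <- P & isL pr.1].
apply: leq_trans (_ : #|[pred x | x \in cl]| <= _).
  apply: subset_leq_card; apply/subsetP => x; rewrite !inE /special Es /=.
  move=> /orP [/orP [->|->]|/hasP [pr prP /orP [/andP [/eqP <- L]|/andP [/eqP <- L]]]]; try by rewrite ?orbT.
    apply/orP; right; apply/orP; right; rewrite mem_cat; apply/orP; left.
    by apply/mapP; exists pr => //; rewrite mem_filter L /P Es.
  apply/orP; right; apply/orP; right; rewrite mem_cat; apply/orP; right.
  by apply/mapP; exists pr => //; rewrite mem_filter L /P Es.
apply: leq_trans (card_size _) _.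
rewrite size_cat !size_cat !size_map !size_filter /=.
have h1 := count_snd isL s; have h2 := count_fst isL s.
rewrite (count_card _ us cov) card_isL in h1 h2.
rewrite -/P in h1 h2. rewrite leq_add2l mul2n -addnn; exact: leq_add h1 h2.
Qed.

Lemma m_le_special : mpar k <= #|[pred x | special x]|.
Proof.
pose f (i : 'I_(mpar k)) := odflt ord0 [pick p : 'I_8 | (2 <= p) && special (mk i p)].
pose g i := mk i (f i).
have ginj : injective g.
  move=> a b h; apply: val_inj; exact: (congr1 (fun x : T => if x is inl (inr (j, _)) then val j else 0) h).
have e1 : #|[seq g i | i in 'I_(mpar k)]| = mpar k by rewrite card_image // card_ord.
rewrite -{1}e1.
apply: subset_leq_card; apply/subsetP => x /mapP [i _ ->]; rewrite inE /g /f.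
case: pickP => [p /andP [_ //]|none].
have [p /andP [p2 sp]] := copy_special i.
have np := negbT (none p).
exfalso; case/nandP: np => /negP H; [exact: H p2 | exact: H sp].
Qed.


End Glob.

Theorem lemma5p4 (k : nat) (hk : 29 <= k) :
  #|QVert k| = 2 * k + 1 /\
  ~ (exists s : seq (QVert k), hamiltonian_path (@Q_adj k) s).
Proof.
split.
  rewrite /QVert !card_sum card_prod !card_ord /rpar /mpar /lpar; lia.
move=> [s [us cov ss]].
have h1 := special_card us cov.
have h2 := m_le_special us cov ss.
have h3 := leq_trans h2 h1.
move: h3; rewrite /mpar /lpar; lia.
Qed.
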